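(* Fix $r\ge1$ and define $R_1=\{\tilde\mu:|\tilde\mu|\le r/\sin(\pi/10)\}$ and $R_2=\{\tilde\mu:\mathrm{Re}(\tilde\mu)\in[r/\tan(\pi/10),\epsilon^{-1/2}],\ \mathrm{Im}(\tilde\mu)\in[-2,2]\}$. Then $R_1$ is compact and $R_1\cup R_2$ contains $\tilde{\mathcal C}_\epsilon$. Moreover $g_\epsilon(\tilde\mu)\to e^{-\tilde\mu/2}$ as $\epsilon\to0$, uniformly in $\tilde\mu\in R_1$; and there exist $\epsilon_0>0$ and a constant $c>0$ such that for all $\epsilon<\epsilon_0$ and all $\tilde\mu\in R_2$, $$|g_\epsilon(\tilde\mu)|\le|e^{-\tilde\mu/2}|\,|e^{-c\epsilon^{1/2}\tilde\mu^2}|.$$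
   Context: $\tau=\frac{1-\epsilon^{1/2}}{1+\epsilon^{1/2}}$ and $g_\epsilon(\tilde\mu)=\prod_{k=0}^\infty(1-\epsilon^{1/2}\tilde\mu\tau^k)$. $\tilde{\mathcal C}_\epsilon=\{e^{i\theta}:\pi/2\le\theta\le3\pi/2\}\cup\{x\pm i:0<x\le\epsilon^{-1/2}-1\}\cup\{\epsilon^{-1/2}-1+iy:-1<y<1\}$. *)

(* Defs.v *)
From Stdlib Require Import Reals List.
From Coquelicot Require Import Coquelicot.
Open Scope R_scope.

Definition cexp (z : C) : C :=
  (exp (Re z) * cos (Im z), exp (Re z) * sin (Im z)).

Definition tau (eps : R) : R := (1 - sqrt eps) / (1 + sqrt eps).

Fixpoint gpart (eps : R) (mu : C) (n : nat) : C :=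
  match n with
  | O => 1%C
  | S m => (gpart eps mu m * (1 - RtoC (sqrt eps) * mu * RtoC (tau eps ^ m)))%C
  end.

Definition g (eps : R) (mu : C) : C :=
  (real (Lim_seq (fun n => Re (gpart eps mu n))),
   real (Lim_seq (fun n => Im (gpart eps mu n)))).

Definition compactC (P : C -> Prop) : Prop :=
  forall (I : Type) (U : I -> C -> Prop),
    (forall i, open (U i)) ->
    (forall z, P z -> exists i, U i z) ->
    exists l : list I, forall z, P z -> exists i, In i l /\ U i z.

Definition Rreg1 (r : R) (mu : C) : Prop := Cmod mu <= r / sin (PI / 10).

Definition Rreg2 (r eps : R) (mu : C) : Prop :=
  r / tan (PI / 10) <= Re mu <= / sqrt eps /\ -2 <= Im mu <= 2.

Definition Ceps (eps : R) (mu : C) : Prop :=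
  (exists theta, PI / 2 <= theta <= 3 * PI / 2 /\ mu = (cos theta, sin theta))
  \/ (exists x, 0 < x <= / sqrt eps - 1 /\ (mu = (x, 1) \/ mu = (x, -1)))
  \/ (exists y, -1 < y < 1 /\ mu = (/ sqrt eps - 1, y)).

(* Main.v *)
Require Import Defs.
From Stdlib Require Import Reals Lra Lia List Classical ClassicalEpsilon.
From Coquelicot Require Import Coquelicot.
Open Scope R_scope.

Lemma exp_le_mono (x y : R) : x <= y -> exp x <= exp y.
Proof. intros h. destruct (Rle_lt_or_eq_dec _ _ h) as [h1|h1]. apply Rlt_le, exp_increasing; auto. rewrite h1; lra. Qed.

Lemma cont_of_deriv (f df : R -> R) : (forall y, is_derive f y (df y)) -> forall y, continuity_pt f y.
Proof. intros H y. apply continuity_pt_filterlim. apply (ex_derive_continuous f). exists (df y). apply H. Qed.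

Lemma L4a (x : R) : 0 <= x -> (1 - x) * exp (x + x^2/2) <= 1.
Proof.
  intros hx.
  set (f := fun y => (1 - y) * exp (y + y^2/2)).
  assert (Hd : forall y, is_derive f y (- y^2 * exp (y + y^2/2))).
  { intros y; unfold f; auto_derive; [auto| ].
    replace (y ^ 2 / 2) with (y * (y * 1) * / 2) by (unfold Rdiv; ring). field. }
  destruct (MVT_gen f 0 x _ (fun y _ => Hd y) (fun y _ => cont_of_deriv _ _ Hd y)) as [c [hc e]].
  change ((1-x)*exp(x+x^2/2)) with (f x).
  assert (f0 : f 0 = 1) by (unfold f; replace (0 + 0^2/2) with 0 by field; rewrite exp_0; ring).
  rewrite f0 in e. cbv beta in e.
  assert (0 <= c^2 * exp (c + c^2/2) * x).
  { apply Rmult_le_pos; auto. apply Rmult_le_pos. apply pow2_ge_0. apply Rlt_le, exp_pos. }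
  lra.
Qed.

Definition Kc : R := 3 * exp 3.

Lemma L4b (x y : R) : 0 <= x <= 1 ->
  (1-x)^2 + y^2 <= exp (-(2*x + x^2) + y^2 * (1 + Kc * x)).
Proof.
  intros hx. set (u := 2*x + x^2).
  assert (eu : exp u = exp (x + x^2/2) * exp (x + x^2/2)) by (rewrite <- exp_plus; unfold u; f_equal; field).
  assert (h1 : (1-x)^2 * exp u <= 1).
  { generalize (L4a x (proj1 hx)). rewrite eu. intros h.
    assert (0 <= (1 - x) * exp (x + x^2/2)) by (generalize (exp_pos (x + x^2/2)); nra).
    replace ((1 - x) ^ 2 * (exp (x + x ^ 2 / 2) * exp (x + x ^ 2 / 2))) with
      (((1 - x) * exp (x + x^2/2)) * ((1 - x) * exp (x + x^2/2))) by ring. nra. }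
  assert (inv : exp u * exp (-u) = 1) by (rewrite <- exp_plus; replace (u + - u) with 0 by ring; apply exp_0).
  assert (h2 : (1-x)^2 <= exp (-u)).
  { generalize (exp_pos (-u)). intros. nra. }
  assert (hu0 : 0 <= u) by (unfold u; nra).
  assert (hu3 : u <= 3 * x) by (unfold u; nra).
  assert (h3 : exp u <= 1 + Kc * x).
  { generalize (exp_ineq1_le (-u)). intros h.
    assert (exp u - u * exp u <= 1) by (generalize (exp_pos u); nra).
    assert (exp u <= exp 3) by (apply exp_le_mono; lra).
    unfold Kc. generalize (exp_pos u); intros; nra. }
  assert (h4 : 1 + y^2 * exp u <= exp (y^2 * (1 + Kc * x))).
  { eapply Rle_trans. apply exp_ineq1_le. apply exp_le_mono. generalize (pow2_ge_0 y); nra. }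
  rewrite exp_plus. fold u.
  assert (0 < exp (-u)) by apply exp_pos.
  assert ((1-x)^2 + y^2 <= exp (-u) * (1 + y^2 * exp u)).
  { replace (exp (-u) * (1 + y^2 * exp u)) with (exp (-u) + y^2 * (exp u * exp (-u))) by ring.
    rewrite inv. lra. }
  nra.
Qed.

Lemma tau_facts (eps : R) : 0 < eps < 1 ->
  0 < sqrt eps < 1 /\ 0 < tau eps < 1 /\ 1 - tau eps = 2 * sqrt eps / (1 + sqrt eps)
  /\ 1 - tau eps ^ 2 = 4 * sqrt eps / (1 + sqrt eps) ^ 2.
Proof.
  intros he. assert (hs : 0 < sqrt eps) by (apply sqrt_lt_R0; lra).
  assert (hs1 : sqrt eps < 1) by (rewrite <- sqrt_1; apply sqrt_lt_1_alt; lra).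
  unfold tau. repeat split; try lra.
  - apply Rdiv_lt_0_compat; lra.
  - apply (Rmult_lt_reg_r (1 + sqrt eps)); [lra|]. unfold Rdiv. rewrite Rmult_assoc, Rinv_l by lra. lra.
  - field. lra.
  - field. lra.
Qed.

Lemma Re_w (s t : R) (mu : C) : Re (RtoC s * mu * RtoC t)%C = s * Re mu * t.
Proof. destruct mu. unfold Cmult, RtoC, Re. simpl. ring. Qed.
Lemma Im_w (s t : R) (mu : C) : Im (RtoC s * mu * RtoC t)%C = s * Im mu * t.
Proof. destruct mu. unfold Cmult, RtoC, Im. simpl. ring. Qed.
Lemma Cmod_w (s t : R) (mu : C) : 0 <= s -> 0 <= t -> Cmod (RtoC s * mu * RtoC t)%C = s * Cmod mu * t.
Proof. intros. rewrite !Cmod_mult, !Cmod_R, !Rabs_pos_eq by auto. ring. Qed.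

Lemma Cmod_1m_le (w : C) : Cmod (1 - w)%C <= exp (Cmod w).
Proof.
  eapply Rle_trans. unfold Cminus. apply Cmod_triangle. rewrite Cmod_1, Cmod_opp.
  generalize (exp_ineq1_le (Cmod w)). lra.
Qed.

Lemma gpart_bound (eps : R) (mu : C) (n : nat) : 0 < eps < 1 ->
  Cmod (gpart eps mu n) <= exp (Cmod mu * sqrt eps * ((1 - tau eps ^ n) / (1 - tau eps))).
Proof.
  intros he. destruct (tau_facts eps he) as [hs [ht _]].
  induction n as [|n IH].
  - simpl. rewrite Cmod_1. replace ((1 - 1) / (1 - tau eps)) with 0 by (field; lra).
    rewrite Rmult_0_r, exp_0. lra.
  - simpl gpart. rewrite Cmod_mult.
    assert (ht0 : 0 <= tau eps ^ n) by (apply pow_le; lra).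
    eapply Rle_trans. apply Rmult_le_compat. apply Cmod_ge_0. apply Cmod_ge_0. exact IH.
    apply Cmod_1m_le. rewrite Cmod_w by lra. rewrite <- exp_plus. apply exp_le_mono.
    right. simpl. field. lra.
Qed.

Lemma snd_le_Cmod (z : C) : Rabs (snd z) <= Cmod z.
Proof.
  unfold Cmod. rewrite <- sqrt_Rsqr_abs. apply sqrt_le_1_alt. unfold Rsqr.
  generalize (pow2_ge_0 (fst z)). simpl. lra.
Qed.

Lemma Cmod_le_sum (z : C) : Cmod z <= Rabs (fst z) + Rabs (snd z).
Proof.
  unfold Cmod. rewrite <- (sqrt_pow2 (Rabs (fst z) + Rabs (snd z))).
  2: { generalize (Rabs_pos (fst z)) (Rabs_pos (snd z)); lra. }
  apply sqrt_le_1_alt.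
  rewrite <- (pow2_abs (fst z)), <- (pow2_abs (snd z)).
  generalize (Rabs_pos (fst z)) (Rabs_pos (snd z)); nra.
Qed.

Lemma fst_le_Cmod (z : C) : Rabs (fst z) <= Cmod z.
Proof. apply (re_le_Cmod z). Qed.

Lemma ballC (z y : C) (e : R) :
  Rabs (fst y - fst z) < e -> Rabs (snd y - snd z) < e -> ball z e y.
Proof.
  intros H1 H2. destruct z as [z1 z2], y as [y1 y2]. split; simpl in *;
  unfold ball; simpl; unfold AbsRing_ball, abs, minus, plus, opp; simpl; auto.
Qed.






Lemma compact_disc (Rr : R) (hR : 0 < Rr) : compactC (fun z => Cmod z <= Rr).
Proof.
  intros I U HU Hcov.
  assert (H0 : Cmod 0 <= Rr) by (rewrite Cmod_0; lra).
  destruct (constructive_indefinite_description _ (Hcov 0%C H0)) as [i0 _].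
  assert (lem : forall z : C, exists e : posreal,
    (Cmod z <= Rr -> exists i, forall y, ball z (2*e) y -> U i y) /\
    (~ Cmod z <= Rr -> forall x, Cmod x <= Rr ->
        ~ (Rabs (fst x - fst z) < e /\ Rabs (snd x - snd z) < e))).
  { intros z. destruct (classic (Cmod z <= Rr)) as [Hz|Hz].
    - destruct (Hcov z Hz) as [i Hi]. destruct (HU i z Hi) as [eps Heps].
      assert (hp : 0 < eps / 2) by (generalize (cond_pos eps); lra).
      exists (mkposreal _ hp). split.
      + intros _. exists i. intros y Hy. apply Heps. simpl in Hy.
        replace (2 * (eps/2)) with (pos eps) in Hy by field. exact Hy.
      + intros H; contradiction.
    - assert (hp : 0 < (Cmod z - Rr) / 2) by lra.
      exists (mkposreal _ hp). split.
      + intros H; contradiction.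
      + intros _ x Hx [h1 h2]. simpl in h1, h2.
        assert (Cmod z <= Cmod x + Cmod (z - x)%C).
        { replace z with (x + (z - x))%C at 1 by ring. apply Cmod_triangle. }
        generalize (Cmod_le_sum (z - x)%C). destruct z, x. simpl in *.
        rewrite <- (Rabs_Ropp (r + - r1)), <- (Rabs_Ropp (r0 + - r2)).
        replace (- (r + - r1)) with (r1 - r) by ring.
        replace (- (r0 + - r2)) with (r2 - r0) by ring. lra. }
  set (zt := fun t : Compactness.Tn 2 R => (fst t, fst (snd t)) : C).
  set (delta := fun t => proj1_sig (constructive_indefinite_description _ (lem (zt t)))).
  assert (lem2 : forall t, exists i, Cmod (zt t) <= Rr ->
                   forall y, ball (zt t) (2 * delta t) y -> U i y).
  { intros t. destruct (classic (Cmod (zt t) <= Rr)) as [Hz|Hz].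
    - unfold delta. destruct (constructive_indefinite_description _ (lem (zt t))) as [e He].
      simpl. destruct (proj1 He Hz) as [i Hi]. exists i. intros _. exact Hi.
    - exists i0. intros h; contradiction. }
  set (pick := fun t => proj1_sig (constructive_indefinite_description _ (lem2 t))).
  destruct (NNPP _ (compactness_list 2 (-Rr, (-Rr, tt)) (Rr, (Rr, tt)) delta)) as [l Hl].
  exists (map pick l). intros z Hz.
  destruct (Hl (fst z, (snd z, tt))) as [t [Hint [_ Hcl]]].
  { simpl. generalize (fst_le_Cmod z) (snd_le_Cmod z). intros h1 h2.
    apply Rabs_le_between in h1, h2. repeat split; try lra. }
  destruct t as [t1 [t2 []]]. simpl in Hcl. destruct Hcl as [c1 [c2 _]].
  exists (pick (t1, (t2, tt))). split.
  - apply in_map. exact Hint.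
  - destruct (classic (Cmod (zt (t1, (t2, tt))) <= Rr)) as [Ht|Ht].
    + unfold pick. destruct (constructive_indefinite_description _ (lem2 (t1, (t2, tt)))) as [i Hi].
      simpl. apply (Hi Ht). apply ballC; simpl.
      * rewrite <- Rabs_Ropp. replace (- (fst z - t1)) with (t1 - fst z) by ring.
        apply Rabs_lt_between in c1. apply Rabs_lt_between. 
        generalize (cond_pos (delta (t1, (t2, tt)))). lra.
      * apply Rabs_lt_between in c2. apply Rabs_lt_between. 
        generalize (cond_pos (delta (t1, (t2, tt)))). lra.
    + exfalso. unfold delta in c1, c2.
      destruct (constructive_indefinite_description _ (lem (zt (t1, (t2, tt))))) as [e He].
      simpl in c1, c2. apply (proj2 He Ht z Hz). simpl. split; assumption.
Qed.


Lemma trig_facts : 0 < sin (PI/10) /\ 0 < cos (PI/10) /\ 0 < tan (PI/10) < 1.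
Proof.
  assert (HP := PI_RGT_0).
  assert (hs : 0 < sin (PI/10)) by (apply sin_gt_0; lra).
  assert (hc : 0 < cos (PI/10)) by (apply cos_gt_0; lra).
  split; [exact hs|]. split; [exact hc|]. split.
  - unfold tan. apply Rdiv_lt_0_compat; assumption.
  - rewrite <- tan_PI4. apply tan_increasing; lra.
Qed.

Lemma Cmod_le_of_sq (mu : C) (M : R) : 0 <= M -> fst mu ^ 2 + snd mu ^ 2 <= M ^ 2 -> Cmod mu <= M.
Proof.
  intros hM h. unfold Cmod. rewrite <- (sqrt_pow2 M hM). apply sqrt_le_1_alt. exact h.
Qed.

Lemma part2 (r : R) (hr : 1 <= r) :
  forall eps, 0 < eps -> forall mu, Ceps eps mu -> Rreg1 r mu \/ Rreg2 r eps mu.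
Proof.
  destruct trig_facts as [hs [hc [ht1 ht2]]].
  set (T := r / tan (PI/10)).
  assert (hT : r <= T).
  { unfold T. assert (1 < / tan (PI/10)).
    { rewrite <- Rinv_1. apply Rinv_lt_contravar; lra. }
    unfold Rdiv. nra. }
  assert (hM : (r / sin (PI/10)) ^ 2 = T ^ 2 + r ^ 2).
  { unfold T, tan. generalize (sin2_cos2 (PI/10)). unfold Rsqr. intros h.
    replace (r / (sin (PI / 10) / cos (PI / 10))) with (r * cos (PI/10) / sin (PI/10)) by (field; lra).
    assert (E : r^2 = r^2 * cos (PI/10)^2 + r^2 * sin (PI/10)^2) by (simpl; nra).
    transitivity ((r^2 * cos (PI/10)^2 + r^2 * sin (PI/10)^2) / sin (PI/10)^2).
    - rewrite <- E. field. lra.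
    - field. lra. }
  assert (hM0 : 0 <= r / sin (PI/10)) by (apply Rlt_le, Rdiv_lt_0_compat; lra).
  intros eps heps mu H. unfold Rreg1, Rreg2. fold T.
  assert (hs0 : 0 < sqrt eps) by (apply sqrt_lt_R0; auto).
  assert (hi : 0 < / sqrt eps) by (apply Rinv_0_lt_compat; auto).
  destruct H as [[th [hth ->]] | [[x [hx [-> | ->]]] | [y [hy ->]]]]; simpl.
  - left. apply Cmod_le_of_sq; auto. rewrite hM. simpl. generalize (sin2_cos2 th).
    unfold Rsqr. nra.
  - destruct (Rle_lt_dec x T).
    + left. apply Cmod_le_of_sq; auto. rewrite hM. simpl. nra.
    + right. lra.
  - destruct (Rle_lt_dec x T).
    + left. apply Cmod_le_of_sq; auto. rewrite hM. simpl. nra.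
    + right. lra.
  - destruct (Rle_lt_dec T (/ sqrt eps - 1)).
    + right. lra.
    + left. apply Cmod_le_of_sq; auto. rewrite hM. simpl.
      destruct (Rle_lt_dec 0 (/ sqrt eps - 1)); nra.
Qed.


Lemma pow_le_one (q : R) (n : nat) : 0 <= q <= 1 -> q ^ n <= 1.
Proof. intros h. induction n; simpl. lra. generalize (pow_le q n (proj1 h)). nra. Qed.

Lemma cauchy_geo (u : nat -> R) (K q : R) : 0 <= q < 1 ->
  (forall n, Rabs (u (S n) - u n) <= K * q ^ n) -> ex_finite_lim_seq u.
Proof.
  intros hq H.
  assert (hK : 0 <= K) by (generalize (H O) (Rabs_pos (u 1%nat - u 0%nat)); simpl; lra).
  assert (key : forall n k, Rabs (u (n + k)%nat - u n) <= K * q ^ n * (1 - q ^ k) / (1 - q)).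
  { intros n k. induction k as [|k IH].
    - rewrite Nat.add_0_r. unfold Rminus. rewrite Rplus_opp_r, Rabs_R0. simpl.
      replace (K * q ^ n * (1 - 1) / (1 - q)) with 0 by (field; lra). lra.
    - replace (n + S k)%nat with (S (n + k)) by lia.
      eapply Rle_trans.
      replace (u (S (n + k)) - u n) with ((u (S (n + k)) - u (n + k)%nat) + (u (n + k)%nat - u n)) by ring.
      apply Rabs_triang. eapply Rle_trans. apply Rplus_le_compat. apply H. apply IH.
      rewrite pow_add. right. simpl. field. lra. }
  assert (key2 : forall n k, Rabs (u (n + k)%nat - u n) <= K * q ^ n / (1 - q)).
  { intros n k. eapply Rle_trans. apply key. unfold Rdiv. apply Rmult_le_compat_r.
    apply Rlt_le, Rinv_0_lt_compat; lra.
    assert (0 <= K * q ^ n * q ^ k) by (repeat apply Rmult_le_pos; auto; apply pow_le; lra).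
    lra. }
  apply ex_lim_seq_cauchy_corr. intros e.
  assert (hy : 0 < e * (1 - q) / (2 * (K + 1))).
  { apply Rdiv_lt_0_compat. apply Rmult_lt_0_compat. apply cond_pos. lra. lra. }
  destruct (pow_lt_1_zero q ltac:(rewrite Rabs_pos_eq; lra) _ hy) as [N HN].
  exists N. intros n m hn hm.
  specialize (HN N (le_n N)). rewrite Rabs_pos_eq in HN by (apply pow_le; lra).
  assert (h1 := key2 N (n - N)%nat). assert (h2 := key2 N (m - N)%nat).
  replace (N + (n - N))%nat with n in h1 by lia. replace (N + (m - N))%nat with m in h2 by lia.
  replace (u n - u m) with ((u n - u N) - (u m - u N)) by ring.
  eapply Rle_lt_trans. apply Rabs_triang. rewrite Rabs_Ropp.
  assert (K * q ^ N / (1 - q) < e / 2).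
  { apply (Rmult_lt_reg_r (1 - q)). lra. unfold Rdiv. rewrite Rmult_assoc, Rinv_l by lra.
    rewrite Rmult_1_r.
    assert (K * q^N <= K * (e * (1 - q) / (2 * (K + 1)))) by (apply Rmult_le_compat_l; lra).
    assert (K * (e * (1 - q) / (2 * (K + 1))) < e / 2 * (1 - q)).
    { unfold Rdiv. apply (Rmult_lt_reg_r (2 * (K+1))). lra.
      field_simplify. 2: lra. generalize (cond_pos e); intros; nra. }
    unfold Rdiv in *. lra. }
  lra.
Qed.

Lemma fst_sub (a b : C) : fst (a - b)%C = fst a - fst b.
Proof. destruct a, b; reflexivity. Qed.
Lemma snd_sub (a b : C) : snd (a - b)%C = snd a - snd b.
Proof. destruct a, b; reflexivity. Qed.

Lemma gpart_lim (eps : R) (mu : C) : 0 < eps < 1 ->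
  is_lim_seq (fun n => fst (gpart eps mu n)) (fst (g eps mu)) /\
  is_lim_seq (fun n => snd (gpart eps mu n)) (snd (g eps mu)).
Proof.
  intros he. destruct (tau_facts eps he) as [hs [ht _]].
  set (B := exp (Cmod mu * sqrt eps / (1 - tau eps))).
  assert (Hd : forall n, Cmod (gpart eps mu (S n) - gpart eps mu n)%C <= B * Cmod mu * sqrt eps * tau eps ^ n).
  { intros n. simpl gpart.
    replace (gpart eps mu n * (1 - RtoC (sqrt eps) * mu * RtoC (tau eps ^ n)) - gpart eps mu n)%C
      with (- (gpart eps mu n * (RtoC (sqrt eps) * mu * RtoC (tau eps ^ n))))%C by ring.
    rewrite Cmod_opp, Cmod_mult, Cmod_w by (try apply pow_le; lra).
    assert (hb : Cmod (gpart eps mu n) <= B).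
    { eapply Rle_trans. apply gpart_bound; auto. apply exp_le_mono.
      assert (0 <= Cmod mu * sqrt eps) by (apply Rmult_le_pos; [apply Cmod_ge_0|lra]).
      replace (Cmod mu * sqrt eps / (1 - tau eps)) with (Cmod mu * sqrt eps * (1 / (1 - tau eps))) by (field; lra).
      apply Rmult_le_compat_l; auto. unfold Rdiv. apply Rmult_le_compat_r.
      apply Rlt_le, Rinv_0_lt_compat; lra.
      generalize (pow_le (tau eps) n ltac:(lra)). lra. }
    assert (0 <= sqrt eps * Cmod mu * tau eps ^ n).
    { apply Rmult_le_pos. apply Rmult_le_pos. lra. apply Cmod_ge_0. apply pow_le; lra. }
    replace (B * Cmod mu * sqrt eps * tau eps ^ n) with (B * (sqrt eps * Cmod mu * tau eps ^ n)) by ring.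
    apply Rmult_le_compat_r; auto. }
  assert (E1 : ex_finite_lim_seq (fun n => fst (gpart eps mu n))).
  { apply (cauchy_geo _ (B * Cmod mu * sqrt eps) (tau eps)). lra.
    intros n. rewrite <- fst_sub. eapply Rle_trans. apply re_le_Cmod. apply Hd. }
  assert (E2 : ex_finite_lim_seq (fun n => snd (gpart eps mu n))).
  { apply (cauchy_geo _ (B * Cmod mu * sqrt eps) (tau eps)). lra.
    intros n. rewrite <- snd_sub. eapply Rle_trans. apply snd_le_Cmod. apply Hd. }
  destruct E1 as [l1 H1]. destruct E2 as [l2 H2]. unfold g. simpl. unfold Re, Im.
  rewrite (is_lim_seq_unique _ _ H1), (is_lim_seq_unique _ _ H2). simpl. split; auto.
Qed.

Lemma lim_sq_le (P : nat -> C) (Z gl : C) (v : nat -> R) (l : R) :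
  is_lim_seq (fun n => fst (P n)) (fst gl) -> is_lim_seq (fun n => snd (P n)) (snd gl) ->
  (forall n, Cmod (P n - Z)%C ^ 2 <= v n) -> is_lim_seq v l -> Cmod (gl - Z)%C ^ 2 <= l.
Proof.
  intros H1 H2 Hb Hv.
  assert (HL : is_lim_seq (fun n => (fst (P n) - fst Z) * (fst (P n) - fst Z) + (snd (P n) - snd Z) * (snd (P n) - snd Z))
     ((fst gl - fst Z) * (fst gl - fst Z) + (snd gl - snd Z) * (snd gl - snd Z))).
  { apply is_lim_seq_plus'; apply is_lim_seq_mult'; apply is_lim_seq_minus'; auto; apply is_lim_seq_const. }
  assert (Hb' : forall n, (fst (P n) - fst Z) * (fst (P n) - fst Z) + (snd (P n) - snd Z) * (snd (P n) - snd Z) <= v n).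
  { intros n. specialize (Hb n). rewrite Cmod2_alt in Hb. unfold Re, Im in Hb.
    rewrite fst_sub, snd_sub in Hb. simpl in Hb. rewrite !Rmult_1_r in Hb. exact Hb. }
  assert (HH := is_lim_seq_le _ _ _ _ Hb' HL Hv). simpl in HH.
  rewrite Cmod2_alt. unfold Re, Im. rewrite fst_sub, snd_sub. simpl. rewrite !Rmult_1_r. apply HH.
Qed.


Lemma Cmod2_1mw (s t : R) (mu : C) :
  Cmod (1 - RtoC s * mu * RtoC t)%C ^ 2 = (1 - s * fst mu * t) ^ 2 + (s * snd mu * t) ^ 2.
Proof. destruct mu. rewrite Cmod2_alt. unfold Re, Im, Cminus, Cplus, Copp, Cmult, RtoC. simpl. ring. Qed.

Lemma ex_derive_cont (f : R -> R) (x : R) : ex_derive f x -> continuity_pt f x.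
Proof. intros H. apply continuity_pt_filterlim. apply (ex_derive_continuous f). exact H. Qed.

Lemma Cmod_cexp (z : C) : Cmod (cexp z) = exp (fst z).
Proof.
  unfold cexp, Cmod, Re, Im. cbn [fst snd].
  replace ((exp (fst z) * cos (snd z)) ^ 2 + (exp (fst z) * sin (snd z)) ^ 2) with (exp (fst z) ^ 2).
  apply sqrt_pow2. apply Rlt_le, exp_pos.
  generalize (sin2_cos2 (snd z)). unfold Rsqr. intros h. simpl. nra.
Qed.

Definition F4 (s a b t T : R) : R :=
  -2*s*a*((1 - T)/(1-t)) - s^2*a^2*((1-T^2)/(1-t^2)) + s^2*b^2*((1-T^2)/(1-t^2))
  + Kc*s^3*a*b^2*((1-T^3)/(1-t^3)).

Lemma Kc_pos : 0 < Kc.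
Proof. unfold Kc. generalize (exp_pos 3). lra. Qed.

Lemma prod4 (eps : R) (mu : C) (n : nat) : 0 < eps < 1 -> 0 <= sqrt eps * fst mu <= 1 ->
  Cmod (gpart eps mu n) ^ 2 <= exp (F4 (sqrt eps) (fst mu) (snd mu) (tau eps) (tau eps ^ n)).
Proof.
  intros he ha. destruct (tau_facts eps he) as [hs [ht _]].
  assert (d1 : 1 - tau eps <> 0) by lra.
  assert (d2 : 1 - tau eps ^ 2 <> 0) by (simpl; nra).
  assert (d3 : 1 - tau eps ^ 3 <> 0) by (simpl; nra).
  induction n as [|n IH].
  - simpl gpart. rewrite Cmod_1. unfold F4. replace (tau eps ^ 0) with 1 by reflexivity.
    match goal with |- _ <= exp ?X => replace X with 0 by (field; auto) end.
    rewrite exp_0. lra.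
  - simpl gpart. rewrite Cmod_mult, Rpow_mult_distr, Cmod2_1mw.
    set (T := tau eps ^ n).
    assert (hT : 0 <= T <= 1) by (split; [apply pow_le; lra | apply pow_le_one; lra]).
    assert (hx : 0 <= sqrt eps * fst mu * T <= 1) by (split; nra).
    eapply Rle_trans. apply Rmult_le_compat. apply pow2_ge_0.
    generalize (pow2_ge_0 (1 - sqrt eps * fst mu * T)) (pow2_ge_0 (sqrt eps * snd mu * T)); lra. exact IH.
    apply (L4b _ (sqrt eps * snd mu * T) hx).
    rewrite <- exp_plus. apply exp_le_mono. right.
    replace (tau eps ^ S n) with (tau eps * T) by reflexivity.
    unfold F4. fold T. field. repeat split; auto.
Qed.

Definition phi4 (s a b t T : R) : R :=
  -2*s*a*((1 - T)/(1-t)) - s^2*a^2*((1-T^2)/(1-t^2)) + s^2*b^2/(1-t^2) + Kc*s^3*a*b^2/(1-t^3).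

Lemma F4_le_phi (s a b t T : R) : 0 < t < 1 -> 0 <= T -> 0 <= s -> 0 <= a ->
  F4 s a b t T <= phi4 s a b t T.
Proof.
  intros ht hT hs ha.
  assert (d2 : 0 < 1 - t ^ 2) by (simpl; nra).
  assert (d3 : 0 < 1 - t ^ 3) by (simpl; nra).
  assert (E : phi4 s a b t T - F4 s a b t T = s^2*b^2*T^2/(1-t^2) + Kc*s^3*a*b^2*T^3/(1-t^3)).
  { unfold phi4, F4. field. lra. }
  assert (0 <= s^2*b^2*T^2/(1-t^2)).
  { apply Rmult_le_pos. apply Rmult_le_pos. apply Rmult_le_pos. 1-3: apply pow2_ge_0. apply Rlt_le, Rinv_0_lt_compat; lra. }
  assert (0 <= Kc*s^3*a*b^2*T^3/(1-t^3)).
  { generalize (pow_le s 3 hs) (pow2_ge_0 b) (pow_le T 3 hT) Kc_pos. intros p1 p2 p3 p4.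
    apply Rmult_le_pos. apply Rmult_le_pos. apply Rmult_le_pos. apply Rmult_le_pos. apply Rmult_le_pos.
    all: try lra. apply Rlt_le, Rinv_0_lt_compat; lra. }
  lra.
Qed.

Lemma g_bound4 (eps : R) (mu : C) : 0 < eps < 1 -> 0 <= sqrt eps * fst mu <= 1 ->
  Cmod (g eps mu) ^ 2 <= exp (phi4 (sqrt eps) (fst mu) (snd mu) (tau eps) 0).
Proof.
  intros he ha. destruct (tau_facts eps he) as [hs [ht _]].
  assert (hd1 : 1 - tau eps <> 0) by lra.
  assert (hd2 : 1 - tau eps ^ 2 <> 0) by (simpl; nra).
  assert (hd3 : 1 - tau eps ^ 3 <> 0) by (simpl; nra).
  assert (hfa : 0 <= fst mu).
  { destruct (Rle_lt_dec 0 (fst mu)); auto. nra. }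
  replace (g eps mu) with (g eps mu - 0)%C by ring.
  destruct (gpart_lim eps mu he) as [H1 H2].
  apply (lim_sq_le (gpart eps mu) 0 (g eps mu)
     (fun n => exp (phi4 (sqrt eps) (fst mu) (snd mu) (tau eps) (tau eps ^ n)))); auto.
  - intros n. replace (gpart eps mu n - 0)%C with (gpart eps mu n) by ring.
    eapply Rle_trans. apply prod4; auto. apply exp_le_mono. apply F4_le_phi; try lra.
    apply pow_le; lra.
  - apply (is_lim_seq_continuous (fun T => exp (phi4 (sqrt eps) (fst mu) (snd mu) (tau eps) T)) (fun n => tau eps ^ n) 0).
    + apply ex_derive_cont. unfold phi4. auto_derive. repeat split; auto.
    + apply is_lim_seq_geom. rewrite Rabs_pos_eq; lra.
Qed.

Lemma alg4 (s a b : R) : 0 < s <= 1/2 -> Kc * s <= 1/8 -> 6*s <= a -> b^2 <= 4 ->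
  phi4 s a b ((1-s)/(1+s)) 0 <= -a - s*(a^2 - b^2)/4.
Proof.
  intros hs hK ha hb.
  set (t := (1-s)/(1+s)).
  assert (ht : 0 < t < 1).
  { unfold t. split. apply Rdiv_lt_0_compat; lra.
    apply (Rmult_lt_reg_r (1 + s)); [lra|]. unfold Rdiv. rewrite Rmult_assoc, Rinv_l by lra. lra. }
  assert (e1 : 2*s*a/(1-t) = a*(1+s)) by (unfold t; field; lra).
  assert (e2 : forall c, c/(1-t^2) = c*(1+s)^2/(4*s)) by (intros; unfold t; field; lra).
  assert (e3 : / (1 - t^3) <= (1+s)/(2*s)).
  { replace ((1+s)/(2*s)) with (/ (1 - t)) by (unfold t; field; lra).
    apply Rinv_le_contravar. lra. simpl. nra. }
  unfold phi4.
  replace (1 - 0) with 1 by ring. replace (1 - 0^2) with 1 by ring.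
  replace (-2*s*a*(1/(1-t))) with (-(2*s*a/(1-t))) by (field; lra). rewrite e1.
  replace (s^2*a^2*(1/(1-t^2))) with (s^2*a^2/(1-t^2)) by (field; simpl; nra).
  rewrite !e2.
  assert (hk0 : 0 <= Kc*s^3*a*b^2).
  { generalize Kc_pos (pow2_ge_0 b). intros. 
    assert (0 <= s^3) by (apply pow_le; lra). assert (0 <= a) by lra.
    apply Rmult_le_pos. apply Rmult_le_pos. apply Rmult_le_pos. all: lra. }
  assert (h3 : Kc*s^3*a*b^2/(1-t^3) <= Kc*s^3*a*b^2*((1+s)/(2*s))).
  { unfold Rdiv at 1. apply Rmult_le_compat_l; auto. }
  assert (h3' : Kc*s^3*a*b^2*((1+s)/(2*s)) = Kc * s^2*a*b^2*(1+s)/2) by (field; lra).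
  assert (p1 : 0 <= s * a^2 * (2*s + s^2)/4).
  { assert (0 <= a^2) by apply pow2_ge_0. assert (0 <= 2*s+s^2) by nra. 
    assert (0 <= s * a^2) by nra. nra. }
  assert (p2 : s * b^2 * (2*s+s^2)/4 <= 5/2 * s^2).
  { assert (0 <= b^2) by apply pow2_ge_0. assert (0 <= s*(2*s+s^2)) by nra.
    assert (s * b^2 * (2*s+s^2) <= s*(2*s+s^2) * 4) by nra. nra. }
  assert (p3 : Kc * s^2*a*b^2*(1+s)/2 <= 3/8 * s * a).
  { assert (0 <= Kc * s) by (generalize Kc_pos; nra).
    assert (0 <= s * a) by nra. assert (0 <= b^2) by apply pow2_ge_0.
    assert (Kc * s^2*a*b^2*(1+s)/2 = (Kc * s) * (s * a) * b^2 * (1+s) / 2) by field.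
    assert ((Kc * s) * (s * a) <= 1/8 * (s*a)) by nra.
    assert (0 <= (Kc * s) * (s * a)) by nra.
    assert ((Kc * s) * (s * a) * b^2 <= 1/8 * (s*a) * 4) by nra.
    assert (0 <= (Kc * s) * (s * a) * b^2) by nra.
    nra. }
  assert (p4 : 6 * s^2 <= s * a) by nra.
  assert (E : - (a * (1 + s)) - s ^ 2 * a ^ 2 * (1 + s) ^ 2 / (4 * s) + s ^ 2 * b ^ 2 * (1 + s) ^ 2 / (4 * s)
             = -a*(1+s) - s*a^2*(1+s)^2/4 + s*b^2*(1+s)^2/4) by (field; lra).
  rewrite E.
  assert (E2 : -a - s*(a^2-b^2)/4 - (-a*(1+s) - s*a^2*(1+s)^2/4 + s*b^2*(1+s)^2/4 + Kc*s^2*a*b^2*(1+s)/2)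
     = a*s + s*a^2*(2*s+s^2)/4 - s*b^2*(2*s+s^2)/4 - Kc*s^2*a*b^2*(1+s)/2) by field.
  assert (q1 : Kc*s^3*a*b^2/(1-t^3) <= 3/8*s*a) by lra.
  assert (q2 : 0 <= a*s + s*a^2*(2*s+s^2)/4 - s*b^2*(2*s+s^2)/4 - Kc*s^2*a*b^2*(1+s)/2).
  { assert (a*s = s*a) by ring. assert (0 <= s^2) by apply pow2_ge_0. lra. }
  lra.
Qed.


Lemma fst_half (mu : C) : fst (- mu / 2)%C = - fst mu / 2.
Proof. destruct mu. unfold Cdiv, Cinv, Cmult, Copp. simpl. field. Qed.

Lemma fst_quad (k : R) (mu : C) : fst (- RtoC k * (mu * mu))%C = - k * (fst mu ^ 2 - snd mu ^ 2).
Proof. destruct mu. unfold Cmult, Copp, RtoC. simpl. ring. Qed.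

Lemma part4 (r : R) (hr : 1 <= r) : exists eps0 c, 0 < eps0 /\ 0 < c /\
        forall eps, 0 < eps < eps0 -> forall mu, Rreg2 r eps mu ->
          Cmod (g eps mu) <=
            Cmod (cexp (- mu / 2)%C)
            * Cmod (cexp (- (RtoC (c * sqrt eps)) * (mu * mu))%C).
Proof.
  destruct trig_facts as [_ [_ [ht1 _]]].
  set (T0 := r / tan (PI/10)).
  assert (hT0 : 0 < T0) by (apply Rdiv_lt_0_compat; lra).
  assert (hK := Kc_pos).
  set (s0 := Rmin (1/2) (Rmin (1/(8*Kc)) (T0/6))).
  assert (hs0 : 0 < s0).
  { unfold s0. apply Rmin_glb_lt. lra. apply Rmin_glb_lt. apply Rdiv_lt_0_compat; lra. lra. }
  assert (hs01 : s0 <= 1/2) by apply Rmin_l.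
  assert (hs02 : s0 <= 1/(8*Kc)) by (eapply Rle_trans; [apply Rmin_r| apply Rmin_l]).
  assert (hs03 : s0 <= T0/6) by (eapply Rle_trans; [apply Rmin_r| apply Rmin_r]).
  exists (s0 ^ 2), (1/8). split. apply pow_lt; lra. split. lra.
  intros eps he mu [[ha1 ha2] hb].
  unfold Re, Im in *. fold T0 in ha1.
  assert (hs : 0 < sqrt eps) by (apply sqrt_lt_R0; lra).
  assert (hss : sqrt eps < s0).
  { rewrite <- (sqrt_pow2 s0) by lra. apply sqrt_lt_1_alt. lra. }
  assert (s0^2 <= 1/4) by (assert (s0 * s0 <= 1/2 * (1/2)) by (apply Rmult_le_compat; lra); simpl; lra).
  assert (he1 : 0 < eps < 1) by lra.
  assert (hKs : Kc * sqrt eps <= 1/8).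
  { assert (Hq : sqrt eps <= 1/(8*Kc)) by lra.
    apply (Rmult_le_compat_l Kc) in Hq; [|lra]. replace (Kc * (1/(8*Kc))) with (1/8) in Hq by (field; lra). lra. }
  assert (ha0 : 0 < fst mu) by lra.
  assert (hsa : sqrt eps * fst mu <= 1).
  { apply (Rmult_le_compat_l (sqrt eps)) in ha2; [|lra]. rewrite Rinv_r in ha2 by lra. lra. }
  assert (hb2 : snd mu ^ 2 <= 4) by (simpl; nra).
  assert (Hg := g_bound4 eps mu he1 ltac:(split; nra)).
  assert (htau : tau eps = (1 - sqrt eps)/(1 + sqrt eps)) by reflexivity.
  rewrite htau in Hg.
  assert (Ha := alg4 (sqrt eps) (fst mu) (snd mu) ltac:(lra) hKs ltac:(lra) hb2).
  set (Q := - fst mu - sqrt eps * (fst mu ^ 2 - snd mu ^ 2) / 4) in *.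
  assert (H1 : Cmod (g eps mu) ^ 2 <= exp (Q/2) ^ 2).
  { eapply Rle_trans. exact Hg. simpl. rewrite Rmult_1_r, <- exp_plus.
    apply exp_le_mono. lra. }
  rewrite !Cmod_cexp, fst_half, fst_quad, <- exp_plus.
  replace (- fst mu / 2 + - (1 / 8 * sqrt eps) * (fst mu ^ 2 - snd mu ^ 2)) with (Q/2) by (unfold Q; field).
  generalize (Cmod_ge_0 (g eps mu)) (exp_pos (Q/2)). intros. nra.
Qed.


Lemma cexp_add (z1 z2 : C) : cexp (z1 + z2)%C = (cexp z1 * cexp z2)%C.
Proof.
  destruct z1 as [a1 b1], z2 as [a2 b2]. unfold cexp, Cmult, Cplus, Re, Im. simpl.
  rewrite exp_plus, cos_plus, sin_plus. f_equal; ring.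
Qed.

Lemma cexp_0 : cexp (RtoC 0) = RtoC 1.
Proof. unfold cexp, Re, Im. simpl. rewrite exp_0, cos_0, sin_0. apply injective_projections; simpl; ring. Qed.

Lemma cexp_opp_mul (w : C) : (cexp (- w) * cexp w)%C = 1%C.
Proof. rewrite <- cexp_add. replace (- w + w)%C with (RtoC 0) by ring. apply cexp_0. Qed.

Lemma abs_trig (al be th y : R) : 0 <= y -> al^2 + be^2 <= y^2 -> Rabs (al * cos th + be * sin th) <= y.
Proof.
  intros hy h. generalize (sin2_cos2 th). unfold Rsqr. intros hc.
  assert (hsq : (al * cos th + be * sin th)^2 <= y^2).
  { assert (0 <= (al * sin th - be * cos th)^2) by apply pow2_ge_0. nra. }
  apply Rabs_le. split; nra.
Qed.

Definition Cq : R := 2 * exp 1 * exp 1.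

Lemma L3 (w : C) : Cmod w <= 1 -> Cmod (1 - w - cexp (- w))%C <= Cq * Cmod w ^ 2.
Proof.
  intros hw. destruct w as [a b].
  assert (hw2 : Cmod (a, b) ^ 2 = a^2 + b^2) by (rewrite Cmod2_alt; reflexivity).
  assert (ha : Rabs a <= 1) by (eapply Rle_trans; [apply (re_le_Cmod (a,b)) | exact hw]).
  set (F1 := fun t => exp (t*a) * (cos (t*b) * (1 - t*a) + sin (t*b) * (t*b))).
  set (F2 := fun t => exp (t*a) * (sin (t*b) * (1 - t*a) - cos (t*b) * (t*b))).
  set (d1 := fun t => - t * exp (t*a) * ((a^2 - b^2) * cos (t*b) + (-2*a*b) * sin (t*b))).
  set (d2 := fun t => - t * exp (t*a) * ((2*a*b) * cos (t*b) + (a^2 - b^2) * sin (t*b))).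
  assert (D1 : forall t, is_derive F1 t (d1 t)).
  { intros t. unfold F1, d1. auto_derive. auto. ring. }
  assert (D2 : forall t, is_derive F2 t (d2 t)).
  { intros t. unfold F2, d2. auto_derive. auto. ring. }
  assert (bnd : forall t, 0 <= t <= 1 ->
     Rabs (- t * exp (t*a)) <= exp 1 /\ forall al be, al^2 + be^2 <= (a^2+b^2)^2 ->
       Rabs (al * cos (t*b) + be * sin (t*b)) <= a^2 + b^2).
  { intros t ht. split.
    - rewrite Rabs_mult, Rabs_Ropp, (Rabs_pos_eq t), (Rabs_pos_eq (exp _)) by (lra || apply Rlt_le, exp_pos).
      assert (exp (t*a) <= exp 1).
      { apply exp_le_mono. apply Rabs_le_between in ha. nra. }
      generalize (exp_pos (t*a)). nra.
    - intros al be h. apply abs_trig; auto. generalize (pow2_ge_0 a) (pow2_ge_0 b); lra. }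
  assert (M1 : Rabs (F1 1 - F1 0) <= exp 1 * Cmod (a, b) ^ 2).
  { destruct (MVT_gen F1 0 1 d1 (fun y _ => D1 y) (fun y _ => cont_of_deriv _ _ D1 y)) as [c [hc e]].
    rewrite Rmin_left, Rmax_right in hc by lra.
    rewrite e, Rminus_0_r, Rmult_1_r. unfold d1. rewrite Rabs_mult, hw2.
    destruct (bnd c hc) as [b1 b2]. apply Rmult_le_compat; try apply Rabs_pos; auto.
    apply b2. nra. }
  assert (M2 : Rabs (F2 1 - F2 0) <= exp 1 * Cmod (a, b) ^ 2).
  { destruct (MVT_gen F2 0 1 d2 (fun y _ => D2 y) (fun y _ => cont_of_deriv _ _ D2 y)) as [c [hc e]].
    rewrite Rmin_left, Rmax_right in hc by lra.
    rewrite e, Rminus_0_r, Rmult_1_r. unfold d2. rewrite Rabs_mult, hw2.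
    destruct (bnd c hc) as [b1 b2]. apply Rmult_le_compat; try apply Rabs_pos; auto.
    apply b2. nra. }
  assert (EF : (cexp (a, b) * (1 - (a, b)) - 1)%C = (F1 1 - F1 0, F2 1 - F2 0)).
  { unfold F1, F2, cexp, Re, Im, Cmult, Cminus, Cplus, Copp. simpl.
    rewrite !Rmult_0_l, !Rmult_1_l, exp_0, cos_0, sin_0. f_equal; ring. }
  assert (E : (1 - (a, b) - cexp (- (a, b)))%C = (cexp (- (a,b)) * (cexp (a, b) * (1 - (a, b)) - 1))%C).
  { transitivity ((cexp (- (a,b)) * cexp (a,b)) * (1 - (a,b)) - cexp (- (a,b)))%C.
    rewrite cexp_opp_mul. ring. ring. }
  rewrite E, Cmod_mult, EF, Cmod_cexp.
  assert (hexp : exp (fst (- (a, b))%C) <= exp 1).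
  { apply exp_le_mono. simpl. apply Rabs_le_between in ha. lra. }
  assert (hc : Cmod (F1 1 - F1 0, F2 1 - F2 0) <= 2 * exp 1 * Cmod (a, b) ^ 2).
  { eapply Rle_trans. apply Cmod_le_sum. simpl. lra. }
  unfold Cq. apply Rle_trans with (exp 1 * (2 * exp 1 * Cmod (a, b) ^ 2)).
  apply Rmult_le_compat; auto. apply Rlt_le, exp_pos. apply Cmod_ge_0.
  right; ring.
Qed.


Definition Qf (eps : R) (mu : C) (T : R) : C :=
  cexp (- (RtoC (sqrt eps * ((1 - T) / (1 - tau eps)))) * mu).

Lemma Cq_pos : 0 < Cq.
Proof. unfold Cq. generalize (exp_pos 1). intros; nra. Qed.

Lemma Qf_step (eps : R) (mu : C) (T : R) : 0 < eps < 1 ->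
  Qf eps mu (tau eps * T) = (Qf eps mu T * cexp (- (RtoC (sqrt eps) * mu * RtoC T)))%C.
Proof.
  intros he. destruct (tau_facts eps he) as [hs [ht _]].
  unfold Qf. rewrite <- cexp_add. f_equal. destruct mu.
  unfold Cmult, Copp, Cplus, RtoC. simpl. f_equal; field; lra.
Qed.

Lemma Qf_1 (eps : R) (mu : C) : 0 < eps < 1 -> Qf eps mu 1 = RtoC 1.
Proof.
  intros he. destruct (tau_facts eps he) as [hs [ht _]].
  unfold Qf. rewrite <- cexp_0. f_equal. destruct mu.
  unfold Cmult, Copp, RtoC. simpl. f_equal; field; lra.
Qed.

Lemma Qf_bound (eps : R) (mu : C) (T : R) : 0 < eps < 1 -> 0 <= T <= 1 ->
  Cmod (Qf eps mu T) <= exp (Cmod mu).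
Proof.
  intros he hT. destruct (tau_facts eps he) as [hs [ht [h1 _]]].
  unfold Qf. rewrite Cmod_cexp. apply exp_le_mono.
  set (k := sqrt eps * ((1 - T) / (1 - tau eps))).
  assert (hk : 0 <= k <= 1).
  { unfold k. rewrite h1. split.
    apply Rmult_le_pos. lra. apply Rdiv_le_0_compat; lra.
    replace (sqrt eps * ((1 - T) / (2 * sqrt eps / (1 + sqrt eps)))) with ((1 - T) * (1 + sqrt eps) / 2) by (field; lra).
    nra. }
  replace (fst (- RtoC k * mu)%C) with (- k * fst mu) by (destruct mu; unfold Cmult, Copp, RtoC; simpl; ring).
  generalize (re_le_Cmod mu) (Cmod_ge_0 mu). unfold Re. intros h2 h3. apply Rabs_le_between in h2. nra.
Qed.

Lemma comp_bound (eps : R) (mu : C) (n : nat) : 0 < eps < 1 -> sqrt eps * Cmod mu <= 1 ->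
  Cmod (gpart eps mu n - Qf eps mu (tau eps ^ n))%C <=
   exp (Cmod mu * sqrt eps * ((1 - tau eps ^ n) / (1 - tau eps))) * exp (Cmod mu) * Cq *
   (Cmod mu ^ 2 * sqrt eps ^ 2 * ((1 - (tau eps ^ n) ^ 2) / (1 - tau eps ^ 2))).
Proof.
  intros he hm. destruct (tau_facts eps he) as [hs [ht _]].
  assert (d1 : 0 < 1 - tau eps) by lra.
  assert (d2 : 0 < 1 - tau eps ^ 2) by (simpl; nra).
  assert (hm0 := Cmod_ge_0 mu).
  assert (hC := Cq_pos).
  induction n as [|n IH].
  - simpl gpart. replace (tau eps ^ 0) with 1 by reflexivity. rewrite Qf_1 by auto.
    replace (RtoC 1 - RtoC 1)%C with (RtoC 0) by ring. rewrite Cmod_0.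
    replace (1 - 1 ^ 2) with 0 by ring. unfold Rdiv. rewrite Rmult_0_l, Rmult_0_r. lra.
  - simpl gpart. replace (tau eps ^ S n) with (tau eps * tau eps ^ n) by reflexivity.
    set (T := tau eps ^ n) in *.
    assert (hT : 0 <= T <= 1) by (split; [apply pow_le; lra | apply pow_le_one; lra]).
    rewrite Qf_step by auto.
    set (w := (RtoC (sqrt eps) * mu * RtoC T)%C).
    assert (hw : Cmod w = sqrt eps * Cmod mu * T) by (unfold w; apply Cmod_w; lra).
    assert (hw1 : Cmod w <= 1) by (rewrite hw; nra).
    replace (gpart eps mu n * (1 - w) - Qf eps mu T * cexp (- w))%C with
      ((gpart eps mu n - Qf eps mu T) * (1 - w) + Qf eps mu T * (1 - w - cexp (- w)))%C by ring.
    eapply Rle_trans. apply Cmod_triangle. rewrite !Cmod_mult.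
    set (A := Cmod mu * sqrt eps * ((1 - T) / (1 - tau eps))) in *.
    set (B := Cmod mu ^ 2 * sqrt eps ^ 2 * ((1 - T ^ 2) / (1 - tau eps ^ 2))) in *.
    assert (hA : 0 <= A).
    { unfold A. apply Rmult_le_pos. apply Rmult_le_pos; lra. apply Rdiv_le_0_compat; lra. }
    assert (hB : 0 <= B).
    { unfold B. apply Rmult_le_pos. apply Rmult_le_pos; apply pow2_ge_0.
      apply Rdiv_le_0_compat. simpl; nra. lra. }
    assert (eA : Cmod mu * sqrt eps * ((1 - tau eps * T) / (1 - tau eps)) = A + Cmod w).
    { rewrite hw. unfold A. field. lra. }
    assert (eB : Cmod mu ^ 2 * sqrt eps ^ 2 * ((1 - (tau eps * T) ^ 2) / (1 - tau eps ^ 2)) = B + Cmod w ^ 2).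
    { rewrite hw. unfold B. field. lra. }
    rewrite eA, eB, exp_plus.
    assert (h1 : Cmod (gpart eps mu n - Qf eps mu T)%C * Cmod (1 - w)%C <= exp A * exp (Cmod mu) * Cq * B * exp (Cmod w)).
    { apply Rmult_le_compat. apply Cmod_ge_0. apply Cmod_ge_0. exact IH. apply Cmod_1m_le. }
    assert (h2 : Cmod (Qf eps mu T) * Cmod (1 - w - cexp (- w))%C <= exp (Cmod mu) * (Cq * Cmod w ^ 2)).
    { apply Rmult_le_compat. apply Cmod_ge_0. apply Cmod_ge_0. apply Qf_bound; auto. apply L3; auto. }
    assert (h3 : 1 <= exp A * exp (Cmod w)).
    { rewrite <- exp_plus. rewrite <- exp_0. apply exp_le_mono. generalize (Cmod_ge_0 w). lra. }
    assert (h4 : 0 <= exp (Cmod mu) * Cq * Cmod w ^ 2).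
    { apply Rmult_le_pos. apply Rmult_le_pos. apply Rlt_le, exp_pos. lra. apply pow2_ge_0. }
    assert (h5 : exp (Cmod mu) * (Cq * Cmod w ^ 2) <= exp A * exp (Cmod w) * exp (Cmod mu) * Cq * Cmod w ^ 2).
    { replace (exp A * exp (Cmod w) * exp (Cmod mu) * Cq * Cmod w ^ 2) with ((exp A * exp (Cmod w)) * (exp (Cmod mu) * Cq * Cmod w ^ 2)) by ring.
      nra. }
    assert (e6 : exp A * exp (Cmod w) * exp (Cmod mu) * Cq * (B + Cmod w ^ 2) =
       exp A * exp (Cmod mu) * Cq * B * exp (Cmod w) + exp A * exp (Cmod w) * exp (Cmod mu) * Cq * Cmod w ^ 2) by ring.
    lra.
Qed.


Lemma lim_sq_le2 (P Qs : nat -> C) (Z gl : C) (v : nat -> R) (l : R) :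
  is_lim_seq (fun n => fst (P n)) (fst gl) -> is_lim_seq (fun n => snd (P n)) (snd gl) ->
  is_lim_seq (fun n => fst (Qs n)) (fst Z) -> is_lim_seq (fun n => snd (Qs n)) (snd Z) ->
  (forall n, Cmod (P n - Qs n)%C ^ 2 <= v n) -> is_lim_seq v l -> Cmod (gl - Z)%C ^ 2 <= l.
Proof.
  intros H1 H2 H3 H4 Hb Hv.
  assert (HL : is_lim_seq (fun n => (fst (P n) - fst (Qs n)) * (fst (P n) - fst (Qs n)) + (snd (P n) - snd (Qs n)) * (snd (P n) - snd (Qs n)))
     ((fst gl - fst Z) * (fst gl - fst Z) + (snd gl - snd Z) * (snd gl - snd Z))).
  { apply is_lim_seq_plus'; apply is_lim_seq_mult'; apply is_lim_seq_minus'; auto. }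
  assert (Hb' : forall n, (fst (P n) - fst (Qs n)) * (fst (P n) - fst (Qs n)) + (snd (P n) - snd (Qs n)) * (snd (P n) - snd (Qs n)) <= v n).
  { intros n. specialize (Hb n). rewrite Cmod2_alt in Hb. unfold Re, Im in Hb.
    rewrite fst_sub, snd_sub in Hb. simpl in Hb. rewrite !Rmult_1_r in Hb. exact Hb. }
  assert (HH := is_lim_seq_le _ _ _ _ Hb' HL Hv). simpl in HH.
  rewrite Cmod2_alt. unfold Re, Im. rewrite fst_sub, snd_sub. simpl. rewrite !Rmult_1_r. apply HH.
Qed.

Lemma Qf_lim (eps : R) (mu : C) : 0 < eps < 1 ->
  is_lim_seq (fun n => fst (Qf eps mu (tau eps ^ n))) (fst (Qf eps mu 0)) /\
  is_lim_seq (fun n => snd (Qf eps mu (tau eps ^ n))) (snd (Qf eps mu 0)).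
Proof.
  intros he. destruct (tau_facts eps he) as [hs [ht _]].
  assert (d1 : 1 - tau eps <> 0) by lra.
  destruct mu as [a b].
  set (k := fun T => sqrt eps * ((1 - T) / (1 - tau eps))).
  assert (Efst : forall T, fst (Qf eps (a, b) T) = exp (- (k T * a)) * cos (- (k T * b))).
  { intros T. unfold Qf, cexp, Re, Im, Cmult, Copp, RtoC. simpl. f_equal; f_equal; fold (k T); ring. }
  assert (Esnd : forall T, snd (Qf eps (a, b) T) = exp (- (k T * a)) * sin (- (k T * b))).
  { intros T. unfold Qf, cexp, Re, Im, Cmult, Copp, RtoC. simpl. f_equal; f_equal; fold (k T); ring. }
  assert (hg : is_lim_seq (fun n => tau eps ^ n) 0) by (apply is_lim_seq_geom; rewrite Rabs_pos_eq; lra).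
  split.
  - assert (Hc : continuity_pt (fun T => exp (- (k T * a)) * cos (- (k T * b))) 0).
    { apply ex_derive_cont. unfold k. auto_derive. auto. }
    assert (HH := is_lim_seq_continuous _ _ _ Hc hg). cbv beta in HH.
    rewrite Efst. eapply is_lim_seq_ext; [|exact HH]. intros n. cbv beta. rewrite Efst. reflexivity.
  - assert (Hc : continuity_pt (fun T => exp (- (k T * a)) * sin (- (k T * b))) 0).
    { apply ex_derive_cont. unfold k. auto_derive. auto. }
    assert (HH := is_lim_seq_continuous _ _ _ Hc hg). cbv beta in HH.
    rewrite Esnd. eapply is_lim_seq_ext; [|exact HH]. intros n. cbv beta. rewrite Esnd. reflexivity.
Qed.


Lemma part3_gen (M : R) (hM : 0 <= M) :
  forall eta, 0 < eta -> exists delta, 0 < delta /\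
    forall eps, 0 < eps < delta -> forall mu, Cmod mu <= M ->
      Cmod (g eps mu - cexp (- mu / 2))%C < eta.
Proof.
  intros eta heta.
  assert (hC := Cq_pos). assert (heM := exp_pos M).
  set (K3 := exp M * exp M * Cq * M^2 + exp M * (Cq + 1) * M).
  assert (hK3 : 0 <= K3).
  { unfold K3. assert (0 <= M^2) by apply pow2_ge_0.
    assert (0 <= exp M * exp M) by nra.
    assert (0 <= exp M * exp M * Cq) by nra.
    assert (0 <= exp M * (Cq + 1)) by nra.
    apply Rplus_le_le_0_compat; apply Rmult_le_pos; lra. }
  set (s1 := Rmin (1/2) (Rmin (1/(M+1)) (eta/(K3+1)))).
  assert (hs1 : 0 < s1).
  { unfold s1. apply Rmin_glb_lt. lra. apply Rmin_glb_lt; apply Rdiv_lt_0_compat; lra. }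
  assert (h11 : s1 <= 1/2) by apply Rmin_l.
  assert (h12 : s1 <= 1/(M+1)) by (eapply Rle_trans; [apply Rmin_r| apply Rmin_l]).
  assert (h13 : s1 <= eta/(K3+1)) by (eapply Rle_trans; [apply Rmin_r| apply Rmin_r]).
  exists (s1 ^ 2). split. apply pow_lt; lra.
  intros eps he mu hmu.
  assert (hs : 0 < sqrt eps) by (apply sqrt_lt_R0; lra).
  assert (hss : sqrt eps < s1).
  { rewrite <- (sqrt_pow2 s1) by lra. apply sqrt_lt_1_alt. lra. }
  assert (hq : s1^2 <= 1/4) by (assert (s1 * s1 <= 1/2 * (1/2)) by (apply Rmult_le_compat; lra); simpl; lra).
  assert (he1 : 0 < eps < 1) by lra.
  destruct (tau_facts eps he1) as [_ [ht [e1 e2]]].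
  set (s := sqrt eps) in *.
  set (m := Cmod mu) in *.
  assert (hm0 : 0 <= m) by apply Cmod_ge_0.
  assert (hsM : s * (M + 1) <= 1).
  { assert (Hq : s <= 1/(M+1)) by lra. apply (Rmult_le_compat_r (M+1)) in Hq; [|lra].
    replace (1/(M+1)*(M+1)) with 1 in Hq by (field; lra). lra. }
  assert (hsm : s * m <= 1) by nra.
  set (E1 := exp M * exp M * Cq * (M^2 * s)).
  assert (hE1 : 0 <= E1).
  { unfold E1. assert (0 <= M^2) by apply pow2_ge_0.
    assert (0 <= exp M * exp M) by nra.
    assert (0 <= exp M * exp M * Cq) by nra.
    assert (0 <= M^2 * s) by nra. apply Rmult_le_pos; lra. }
  assert (HA : forall n, Cmod (gpart eps mu n - Qf eps mu (tau eps ^ n))%C <= E1).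
  { intros n. eapply Rle_trans. apply comp_bound; auto. fold s m.
    set (T := tau eps ^ n).
    assert (hT : 0 <= T <= 1) by (split; [apply pow_le; lra | apply pow_le_one; lra]).
    assert (b1 : exp (m * s * ((1 - T) / (1 - tau eps))) <= exp M).
    { apply exp_le_mono. rewrite e1.
      replace (m * s * ((1 - T) / (2 * s / (1 + s)))) with (m * ((1 - T) * (1 + s) / 2)) by (field; lra).
      assert ((1 - T) * (1 + s) / 2 <= 1) by nra. assert (0 <= (1 - T) * (1 + s) / 2) by nra. nra. }
    assert (b2 : m^2 * s^2 * ((1 - T^2) / (1 - tau eps ^ 2)) <= M^2 * s).
    { rewrite e2.
      replace (m^2 * s^2 * ((1 - T^2) / (4 * s / (1 + s)^2))) with (m^2 * (s * ((1 - T^2) * (1 + s)^2 / 4))) by (field; lra).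
      assert (0 <= (1 - T^2) * (1 + s)^2 / 4 <= 1).
      { assert (0 <= T^2 <= 1) by (simpl; nra). assert ((1+s)^2 <= 4) by nra.
        assert (0 <= (1+s)^2) by apply pow2_ge_0. split; nra. }
      assert (m^2 <= M^2) by (simpl; nra). assert (0 <= m^2) by apply pow2_ge_0. nra. }
    assert (b3 : exp m <= exp M) by (apply exp_le_mono; lra).
    assert (0 <= m^2 * s^2 * ((1 - T^2) / (1 - tau eps ^ 2))).
    { apply Rmult_le_pos. apply Rmult_le_pos; apply pow2_ge_0. apply Rdiv_le_0_compat. simpl; nra. simpl; nra. }
    unfold E1. generalize (exp_pos (m * s * ((1 - T) / (1 - tau eps)))) (exp_pos m). intros.
    apply Rmult_le_compat; try lra.
    apply Rmult_le_pos. apply Rmult_le_pos. lra. lra. lra.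
    apply Rmult_le_compat; try lra. apply Rmult_le_pos; lra.
    apply Rmult_le_compat; lra. }
  destruct (gpart_lim eps mu he1) as [G1 G2].
  destruct (Qf_lim eps mu he1) as [Q1 Q2].
  assert (HA2 : Cmod (g eps mu - Qf eps mu 0)%C ^ 2 <= E1 ^ 2).
  { apply (lim_sq_le2 (gpart eps mu) (fun n => Qf eps mu (tau eps ^ n)) _ _ (fun _ => E1 ^ 2)); auto.
    intros n. apply pow_incr. split. apply Cmod_ge_0. apply HA. apply is_lim_seq_const. }
  assert (HA3 : Cmod (g eps mu - Qf eps mu 0)%C <= E1).
  { generalize (Cmod_ge_0 (g eps mu - Qf eps mu 0)%C). intros. simpl in HA2. nra. }
  set (w := (RtoC (s / 2) * mu)%C).
  assert (hw : Cmod w = s * m / 2).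
  { unfold w. rewrite Cmod_mult, Cmod_R, Rabs_pos_eq by lra. fold m. field. }
  assert (hw1 : Cmod w <= 1) by (rewrite hw; nra).
  assert (EQ : Qf eps mu 0 = (cexp (- mu / 2) * cexp (- w))%C).
  { unfold Qf. rewrite <- cexp_add. f_equal. fold s. unfold w. destruct mu.
    unfold Cdiv, Cinv, Cmult, Copp, Cplus, RtoC. simpl.
    rewrite e1. f_equal; field; lra. }
  assert (HB : Cmod (Qf eps mu 0 - cexp (- mu / 2))%C <= exp M * (Cq + 1) * M * s).
  { rewrite EQ.
    replace (cexp (- mu / 2) * cexp (- w) - cexp (- mu / 2))%C with
      (cexp (- mu / 2) * (- (1 - w - cexp (- w)) - w))%C by ring.
    rewrite Cmod_mult, Cmod_cexp, fst_half.
    assert (b1 : exp (- fst mu / 2) <= exp M).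
    { apply exp_le_mono. generalize (re_le_Cmod mu). unfold Re. fold m. intros hh.
      apply Rabs_le_between in hh. lra. }
    assert (b2 : Cmod (- (1 - w - cexp (- w)) - w)%C <= (Cq + 1) * M * s).
    { unfold Cminus at 1. eapply Rle_trans. apply Cmod_triangle. rewrite !Cmod_opp.
      assert (L := L3 w hw1).
      assert (Cmod w ^ 2 <= Cmod w) by (generalize (Cmod_ge_0 w); simpl; nra).
      assert (Cmod w <= M * s) by (rewrite hw; nra).
      nra. }
    replace (exp M * (Cq + 1) * M * s) with (exp M * ((Cq + 1) * M * s)) by ring.
    apply Rmult_le_compat; auto. apply Rlt_le, exp_pos. apply Cmod_ge_0. }
  replace (g eps mu - cexp (- mu / 2))%C with ((g eps mu - Qf eps mu 0) + (Qf eps mu 0 - cexp (- mu / 2)))%C by ring.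
  eapply Rle_lt_trans. apply Cmod_triangle.
  assert (E1 + exp M * (Cq + 1) * M * s = K3 * s) by (unfold E1, K3; ring).
  assert (K3 * s < eta).
  { assert (s < eta / (K3 + 1)) by lra.
    apply (Rmult_lt_compat_l (K3 + 1)) in H0; [|lra].
    replace ((K3 + 1) * (eta / (K3 + 1))) with eta in H0 by (field; lra). nra. }
  lra.
Qed.

Theorem lemma14 (r : R) (hr : 1 <= r) :
  compactC (Rreg1 r)
  /\ (forall eps, 0 < eps -> forall mu, Ceps eps mu -> Rreg1 r mu \/ Rreg2 r eps mu)
  /\ (forall eta, 0 < eta -> exists delta, 0 < delta /\
        forall eps, 0 < eps < delta -> forall mu, Rreg1 r mu ->
          Cmod (g eps mu - cexp (- mu / 2))%C < eta)
  /\ (exists eps0 c, 0 < eps0 /\ 0 < c /\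
        forall eps, 0 < eps < eps0 -> forall mu, Rreg2 r eps mu ->
          Cmod (g eps mu) <=
            Cmod (cexp (- mu / 2)%C)
            * Cmod (cexp (- (RtoC (c * sqrt eps)) * (mu * mu))%C)).
Proof.
  destruct trig_facts as [hs _].
  assert (hM : 0 < r / sin (PI / 10)) by (apply Rdiv_lt_0_compat; lra).
  split. { unfold Rreg1. apply compact_disc. exact hM. }
  split. { apply part2; auto. }
  split. { intros eta heta. apply (part3_gen (r / sin (PI / 10))); auto. lra. }
  apply part4; auto.
Qed.
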